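(* Let $\Delta:A\to A$ be a weak-2-local derivation on a C$^*$-algebra $A$. Suppose $p$ is a projection in $A$ and $b\in A$ satisfies $pb=bp=0$. Then $p\Delta(a+b)p=p\Delta(a)p$ for every $a\in A$. In particular, $p\Delta(a)p=p\Delta(a-(1-p)a(1-p))p$ for every $a\in A$.
   Context: Here $(1-p)a(1-p)=a-pa-ap+pap$ (computed in the unitization if $A$ is non-unital). A derivation on $A$ is a linear map $D:A\to A$ with $D(ab)=D(a)b+aD(b)$. A (not necessarily linear) map $\Delta:A\to A$ is a weak-2-local derivation if for every $a,b\in A$ and every $\phi\in A^*$ there exists a derivation $D_{a,b,\phi}:A\to A$ such that $\phi\Delta(a)=\phi D_{a,b,\phi}(a)$ and $\phi\Delta(b)=\phi D_{a,b,\phi}(b)$. *)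

(* Defs.v *)
From HB Require Import structures.
From mathcomp Require Import all_boot all_order all_algebra.
From mathcomp Require Import all_classical all_reals all_analysis.
From mathcomp Require Import complex.
Set Implicit Arguments. Unset Strict Implicit. Unset Printing Implicit Defensive.
Import Order.TTheory GRing.Theory Num.Theory.
Import numFieldNormedType.Exports.
Local Open Scope ring_scope.
Local Open Scope complex_scope.

Record is_Cstar_algebra (R : realType) (A : completeNormedModType R[i])
    (mul : A -> A -> A) (star : A -> A) : Prop := {
  cs_mulA : forall x y z, mul x (mul y z) = mul (mul x y) z;
  cs_mulDl : forall x y z, mul (x + y) z = mul x z + mul y z;
  cs_mulDr : forall x y z, mul x (y + z) = mul x y + mul x z;
  cs_mulZl : forall (k : R[i]) x y, mul (k *: x) y = k *: mul x y;
  cs_mulZr : forall (k : R[i]) x y, mul x (k *: y) = k *: mul x y;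
  cs_starK : forall x, star (star x) = x;
  cs_starD : forall x y, star (x + y) = star x + star y;
  cs_starZ : forall (k : R[i]) x, star (k *: x) = (k^*)%C *: star x;
  cs_starM : forall x y, star (mul x y) = mul (star y) (star x);
  cs_normM : forall x y, `|mul x y| <= `|x| * `|y|;
  cs_Cstar : forall x, `|mul (star x) x| = `|x| ^+ 2
}.

Definition is_derivation (R : realType) (A : completeNormedModType R[i])
    (mul : A -> A -> A) (D : A -> A) : Prop :=
  (forall x y, D (x + y) = D x + D y) /\
  (forall (k : R[i]) x, D (k *: x) = k *: D x) /\
  (forall x y, D (mul x y) = mul (D x) y + mul x (D y)).

Definition in_dual (R : realType) (A : completeNormedModType R[i])
    (phi : A -> R[i]) : Prop :=
  (forall x y, phi (x + y) = phi x + phi y) /\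
  (forall (k : R[i]) x, phi (k *: x) = k * phi x) /\
  continuous (phi : A -> (R[i] : numFieldType)).

Definition weak_2_local_derivation (R : realType) (A : completeNormedModType R[i])
    (mul : A -> A -> A) (Delta : A -> A) : Prop :=
  forall (a b : A) (phi : A -> R[i]), in_dual phi ->
    exists D : A -> A, is_derivation mul D /\
      phi (Delta a) = phi (D a) /\ phi (Delta b) = phi (D b).

Definition is_projection (R : realType) (A : completeNormedModType R[i])
    (mul : A -> A -> A) (star : A -> A) (p : A) : Prop :=
  star p = p /\ mul p p = p.

(* Main.v *)
Require Import Defs.
From HB Require Import structures.
From mathcomp Require Import all_boot all_order all_algebra.
From mathcomp Require Import all_classical all_reals all_analysis.
From mathcomp Require Import complex.
From mathcomp Require Import lra ring.
Import Order.TTheory GRing.Theory Num.Theory.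
Import numFieldNormedType.Exports.
Local Open Scope ring_scope.

Module HBM.
Local Open Scope complex_scope.
Local Open Scope classical_set_scope.
Section HB.
Variable R : realType.
Variable V : normedModType R[i].
Definition N (u : V) : R := complex.Re `|u|.

Lemma realC_D (x y : R) : (x + y)%:C = x%:C + y%:C :> R[i].
Proof. by apply/eqP; rewrite eq_complex /= addr0 !eqxx. Qed.
Lemma realC_M (x y : R) : (x * y)%:C = x%:C * y%:C :> R[i].
Proof. by apply/eqP; rewrite eq_complex /= !mulr0 !mul0r subr0 addr0 !eqxx. Qed.
Lemma realC_N (x : R) : (- x)%:C = - x%:C :> R[i].
Proof. by apply/eqP; rewrite eq_complex /= oppr0 !eqxx. Qed.

Lemma normE (u : V) : `|u| = (N u)%:C.
Proof. by rewrite /N RRe_real // normr_real. Qed.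

Lemma N_ge0 u : 0 <= N u.
Proof. by rewrite -ler0c -normE. Qed.

Lemma N_add u v : N (u + v) <= N u + N v.
Proof. by rewrite -lecR realC_D -!normE ler_normD. Qed.

Lemma normcR (r : R) : `|r%:C| = `|r|%:C :> R[i].
Proof. by rewrite normc_def /= expr0n /= addr0 sqrtr_sqr. Qed.

Lemma N_scale (r : R) u : N (r%:C *: u) = `|r| * N u.
Proof.
have := normrZ (r%:C) u; rewrite normcR !normE -realC_M => H.
by move: H => /(congr1 (@complex.Re R)).
Qed.

Lemma N_opp u : N (- u) = N u.
Proof. by rewrite /N normrN. Qed.

Lemma N_eq0 u : N u = 0 -> u = 0.
Proof. by move=> H; apply/eqP; rewrite -normr_eq0 normE H. Qed.

Lemma N0 : N 0 = 0.
Proof. by rewrite /N normr0. Qed.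

Definition good (G : set (V * R)) : Prop :=
  [/\ G (0, 0),
   (forall u a v b, G (u, a) -> G (v, b) -> G (u + v, a + b)),
   (forall u a (r : R), G (u, a) -> G (r%:C *: u, r * a)) &
   (forall u a, G (u, a) -> a <= N u)].

Lemma real0 : (0 : R)%:C = 0 :> R[i]. Proof. by []. Qed.
Lemma real1 : (1 : R)%:C = 1 :> R[i]. Proof. by []. Qed.
Lemma realN1 : (- 1 : R)%:C = - 1 :> R[i]. Proof. by rewrite realC_N. Qed.

Lemma good_fun G u a b : good G -> G (u, a) -> G (u, b) -> a = b.
Proof.
case=> G00 GD GZ GN Ga Gb.
have H : forall a b, G (u, a) -> G (u, b) -> a <= b.
  move=> a' b' Ga' Gb'.
  have := GD _ _ _ _ Ga' (GZ _ _ (-1) Gb').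
  rewrite realN1 scaleN1r subrr mulN1r => /GN; rewrite N0 subr_le0 //.
by apply/le_anti; rewrite !H.
Qed.


Section Ext.
Variable G : set (V * R).
Hypothesis gG : good G.
Variable v : V.

Definition Lset : set R := [set y | exists u a, G (u, a) /\ y = a - N (u - v)].
Definition cc : R := sup Lset.

Lemma key u a w b : G (u, a) -> G (w, b) -> a - N (u - v) <= N (w + v) - b.
Proof.
case: gG => _ GD _ GN Ga Gb.
have := GN _ _ (GD _ _ _ _ Ga Gb).
have -> : u + w = (u - v) + (w + v) by rewrite addrACA addNr addr0.
move=> h; have h2 := le_trans h (N_add (u - v) (w + v)).
by rewrite lerBlDr addrAC lerBrDr [N (w + v) + _]addrC.
Qed.

Lemma Lset_ub : has_ubound Lset.
Proof.
case: gG => G00 _ _ _.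
exists (N (0 + v) - 0) => y [u [a [Ga ->]]]; exact: key.
Qed.

Lemma cc_ge u a : G (u, a) -> a - N (u - v) <= cc.
Proof. by move=> Ga; apply: ub_le_sup Lset_ub _ _; exists u, a. Qed.

Lemma cc_le w b : G (w, b) -> cc <= N (w + v) - b.
Proof.
case: gG => G00 _ _ _ Gb; apply: ge_sup.
  by exists (0 - N (0 - v)), 0, 0.
by move=> y [u [a [Ga ->]]]; exact: key.
Qed.

Definition Gext : set (V * R) :=
  [set z | exists u a (r : R), G (u, a) /\ z = (u + r%:C *: v, a + r * cc)].

Lemma Gext_good : good Gext.
Proof.
case: gG => G00 GD GZ GN; split.
- exists 0, 0, 0. split. exact: G00.
  by rewrite real0 scale0r mul0r !addr0.
- move=> u1 a1 u2 a2 [w1 [b1 [r1 [G1 [-> ->]]]]] [w2 [b2 [r2 [G2 [-> ->]]]]].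
  exists (w1 + w2), (b1 + b2), (r1 + r2); split; first exact: GD.
  congr pair; first by rewrite realC_D scalerDl addrACA.
  by rewrite mulrDl addrACA.
- move=> u a r [w [b [r1 [G1 [-> ->]]]]].
  exists (r%:C *: w), (r * b), (r * r1); split; first exact: GZ.
  by rewrite scalerDr scalerA realC_M mulrDr mulrA.
- move=> u a [w [b [r [G1 [-> ->]]]]].
  have [r0|r0|->] := ltrgtP r 0; last by rewrite scale0r mul0r !addr0; exact: GN.
  +
    have G2 := GZ _ _ (- r^-1) G1.
    have := @cc_ge _ _ G2.
    have -> : (- r^-1)%:C *: w - v = (- r^-1)%:C *: (w + r%:C *: v).
      rewrite scalerDr scalerA -realC_M mulNr mulVf ?lt_eqF // realN1 scaleN1r.
      by [].
    rewrite N_scale ger0_norm; last by rewrite oppr_ge0 invr_le0 ltW.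
    rewrite lerBlDr => h.
    have := ler_wnM2l (ltW r0) h.
    have e : r * - r^-1 = -1 by rewrite mulrN mulfV ?lt_eqF.
    rewrite mulrDr !mulrA e !mulN1r => h3; lra.
  +
    have G2 := GZ _ _ (r^-1) G1.
    have := @cc_le _ _ G2.
    have -> : r^-1%:C *: w + v = r^-1%:C *: (w + r%:C *: v).
      by rewrite scalerDr scalerA -realC_M mulVf ?gt_eqF // real1 scale1r.
    rewrite N_scale gtr0_norm ?invr_gt0 // => h.
    have := ler_wpM2l (ltW r0) h.
    rewrite mulrBr !mulrA mulfV ?gt_eqF // !mul1r => h3; lra.
Qed.

Lemma Gext_sup : G `<=` Gext.
Proof. by case=> u a Ga; exists u, a, 0; rewrite real0 scale0r mul0r !addr0. Qed.

Lemma Gext_v : Gext (v, cc).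
Proof. by exists 0, 0, 1; case: gG => G00 _ _ _; rewrite real1 scale1r add0r mul1r add0r. Qed.

End Ext.

Section Max.
Variable x0 : V.
Definition G0 : set (V * R) := [set z | exists t : R, z = (t%:C *: x0, t * N x0)].

Lemma G0_good : good G0.
Proof.
split.
- by exists 0; rewrite real0 scale0r mul0r.
- move=> u a v b [t1 [-> ->]] [t2 [-> ->]]; exists (t1 + t2).
  by rewrite realC_D scalerDl mulrDl.
- move=> u a r [t [-> ->]]; exists (r * t).
  by rewrite scalerA realC_M mulrA.
- move=> u a [t [-> ->]]; rewrite N_scale.
  by apply: ler_wpM2r; [exact: N_ge0 | exact: ler_norm].
Qed.

Definition Tg := {G : set (V * R) | good G /\ G0 `<=` G}.
Definition Rg (s t : Tg) : bool := `[< proj1_sig s `<=` proj1_sig t >].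

Lemma exists_total : exists G, [/\ good G, G0 `<=` G & forall v, exists a, G (v, a)].
Proof.
have t0 : Tg by exists G0; split; [exact: G0_good | by []].
have [|||t tmax] := @ZL_preorder Tg t0 Rg.
- by move=> s; apply/asboolP.
- by move=> r s t /asboolP rs /asboolP st; apply/asboolP; exact: subset_trans rs st.
- move=> A Atot.
  pose U : set (V * R) := [set z | G0 z \/ exists2 s, A s & proj1_sig s z].
  have sub : forall s, A s -> proj1_sig s `<=` U by move=> s As z sz; right; exists s.
  have two : forall z1 z2, U z1 -> U z2 ->
      exists H, [/\ good H, H `<=` U, H z1 & H z2].
    move=> z1 z2 [h1|[s1 As1 h1]] [h2|[s2 As2 h2]].
    + by exists G0; split=> //; [exact: G0_good | move=> z hz; left].
    + exists (proj1_sig s2); split=> //; first by case: (proj2_sig s2).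
        exact: sub.
      exact: (proj2 (proj2_sig s2)).
    + exists (proj1_sig s1); split=> //; first by case: (proj2_sig s1).
        exact: sub.
      exact: (proj2 (proj2_sig s1)).
    + have [/asboolP r12|/asboolP r21] := Atot _ _ As1 As2.
      * by exists (proj1_sig s2); split=> //; [case: (proj2_sig s2) | exact: sub | exact: r12].
      * by exists (proj1_sig s1); split=> //; [case: (proj2_sig s1) | exact: sub | exact: r21].
  have gU : good U.
    split.
    - by left; case: G0_good.
    - move=> u a v b hu hv; have [H [gH HU H1 H2]] := two _ _ hu hv.
      by apply: HU; case: gH => _ GD _ _; exact: GD.
    - move=> u a r hu; have [H [gH HU H1 _]] := two _ _ hu hu.
      by apply: HU; case: gH => _ _ GZ _; exact: GZ.
    - move=> u a hu; have [H [gH HU H1 _]] := two _ _ hu hu.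
      by case: gH => _ _ _ GN; exact: GN.
  have hU : good U /\ G0 `<=` U by split=> // z hz; left.
  exists (exist _ U hU) => s As; apply/asboolP; exact: sub.
- case: t tmax => G [gG sG] tmax.
  exists G; split=> // v; exists (cc G v).
  have hE : good (Gext G v) /\ G0 `<=` Gext G v.
    split; first exact: Gext_good.
    by move=> z /sG; exact: Gext_sup.
  have := tmax (exist _ (Gext G v) hE).
  have h1 : Rg (exist _ G (conj gG sG)) (exist _ (Gext G v) hE).
    by apply/asboolP => /=; exact: Gext_sup.
  move=> /(_ h1) /asboolP /= hsub; apply: hsub; exact: Gext_v.
Qed.
End Max.

End HB.

Arguments good_fun {R V G u a b}.
Arguments N {R V}.
Arguments N_scale {R V}.
Arguments N_opp {R V}.
Arguments N_eq0 {R V}.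
Arguments N_ge0 {R V}.
Arguments normE {R V}.
Arguments good {R V}.
Arguments G0 {R V}.
Arguments exists_total {R V}.

Local Open Scope ring_scope.
Section HB2.
Variable R : realType.
Variable V : normedModType R[i].

Lemma ii : 'i%C * 'i%C = -1 :> R[i].
Proof. by apply/eqP; rewrite eq_complex /= !mul0r !mul1r sub0r add0r oppr0 !eqxx. Qed.

Lemma normi : `|'i%C| = 1 :> R[i].
Proof. by rewrite normc_def /= expr0n /= expr1n add0r sqrtr1. Qed.

Lemma hahn_banach (x0 : V) : x0 <> 0 ->
  exists f : V -> R[i], [/\ (forall x y, f (x + y) = f x + f y),
     (forall (k : R[i]) x, f (k *: x) = k * f x),
     (forall y, `|f y| <= 2 * `|y|) & f x0 <> 0].
Proof.
move=> x0n0.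
have [G [gG sG tot]] := exists_total x0.
have [g Hg] := choice tot.
case: (gG) => G00 GD GZ GN.
have gD : forall u v, g (u + v) = g u + g v.
  by move=> u v; apply: (good_fun gG (Hg _)); apply: GD.
have gZ : forall (r : R) u, g (r%:C *: u) = r * g u.
  by move=> r u; apply: (good_fun gG (Hg _)); apply: GZ.
have gB : forall u, `|g u| <= N u.
  move=> u; rewrite ler_norml (GN _ _ (Hg u)) andbT lerNl.
  have := GN _ _ (Hg ((-1)%:C *: u)).
  by rewrite gZ realN1 scaleN1r N_opp mulN1r.
have gx0 : g x0 = N x0.
  apply: (good_fun gG (Hg _)); apply: sG; exists 1.
  by rewrite real1 scale1r mul1r.
pose f y := (g y)%:C - 'i%C * (g ('i%C *: y))%:C.
have fD : forall x y, f (x + y) = f x + f y.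
  move=> x y; rewrite /f scalerDr !gD !realC_D. ring.
have fR : forall (r : R) y, f (r%:C *: y) = r%:C * f y.
  move=> r y; rewrite /f.
  have -> : 'i%C *: (r%:C *: y) = r%:C *: ('i%C *: y) by rewrite !scalerA mulrC.
  rewrite !gZ !realC_M; ring.
have fI : forall y, f ('i%C *: y) = 'i%C * f y.
  move=> y; rewrite /f scalerA ii.
  have -> : -1 *: y = (-1)%:C *: y by rewrite realN1.
  by rewrite gZ mulN1r realC_N mulrBr mulrA ii mulN1r mulrN !opprK addrC.
exists f; split.
- exact: fD.
- move=> k y; rewrite {1}(complexE k) scalerDl -scalerA fD fI !fR.
  by rewrite [in RHS](complexE k) mulrDl mulrA.
- move=> y; rewrite /f; apply: (le_trans (ler_normB _ _)).
  rewrite normrM normi mul1r !normcR mulr_natl mulr2n.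
  apply: lerD; rewrite normE lecR.
    exact: gB.
  apply: (le_trans (gB _)); rewrite /N normrZ normi mul1r //.
- rewrite /f gx0 => /(congr1 (@complex.Re R)) /=.
  rewrite !mul0r !mul1r subr0 => /eqP; rewrite subr0 => /eqP /N_eq0.
  exact: x0n0.
Qed.
End HB2.

Lemma bound_continuous (R : realType) (V : normedModType R[i]) (W : pseudoMetricNormedZmodType R[i])
  (f : V -> W) (C : R[i]) :
  (forall x y, f (x + y) = f x + f y) -> 0 < C ->
  (forall y, `|f y| <= C * `|y|) -> continuous f.
Proof.
move=> fD C0 fB x; apply/(@cvgrPdist_lt _ _ _ (nbhs x)) => e e0.
have fB' : forall z, f x - f z = f (x - z).
  move=> z; have := fD (x - z) z; rewrite subrK => ->; by rewrite addrK.
have e'0 : 0 < e / C by rewrite divr_gt0.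
have H := (@cvgrPdist_lt _ _ _ (nbhs x) _ id x).1 cvg_id (e / C) e'0.
near=> z.
have hz : `|x - z| < e / C by near: z; exact: H.
rewrite fB'; apply: (le_lt_trans (fB _)).
by rewrite -ltr_pdivlMl // mulrC.
Unshelve. all: by end_near.
Qed.

End HBM.
Import HBM.

Section Main.
Variable R : realType.
Variable A : completeNormedModType R[i].

Lemma sep (x : A) : (forall phi, in_dual phi -> phi x = 0) -> x = 0.
Proof.
move=> H; apply/eqP; apply/negPn/negP => /eqP xn0.
have [f [fD fZ fB fx]] := @hahn_banach R A x xn0.
apply: fx; apply: H; split; first exact: fD.
split; first by move=> k y; rewrite fZ.
have h := (@bound_continuous R A ((R[i] : numFieldType) : pseudoMetricNormedZmodType R[i]) f 2 fD).
have h2 : (0:R[i]) < 2 by rewrite ltr0n.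
have h3 := h h2 fB. exact: h3.
Qed.

Lemma my_add0 (U W : zmodType) (f : U -> W) : (forall x y, f (x + y) = f x + f y) -> f 0 = 0.
Proof. by move=> fD; apply: (addrI (f 0)); rewrite -fD !addr0. Qed.

Lemma my_addN (U W : zmodType) (f : U -> W) : (forall x y, f (x + y) = f x + f y) ->
  forall x, f (- x) = - f x.
Proof.
move=> fD x; apply/eqP; rewrite -addr_eq0 -fD addNr; apply/eqP; exact: my_add0.
Qed.

End Main.

Lemma part1 (R : realType) (A : completeNormedModType R[i])
    (mul : A -> A -> A) (star : A -> A) (Delta : A -> A) (p b : A) :
  is_Cstar_algebra mul star ->
  weak_2_local_derivation mul Delta ->
  mul p b = 0 -> mul b p = 0 ->
  forall a : A, mul (mul p (Delta (a + b))) p = mul (mul p (Delta a)) p.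
Proof.
move=> CS W2 pb bp a.
have mulDl := cs_mulDl CS; have mulDr := cs_mulDr CS.
have mul0 : forall x, mul x 0 = 0 by move=> x; exact: (@my_add0 _ _ _ (mulDr x)).
have mulNl : forall x y, mul (- x) y = - mul x y.
  by move=> x y; apply: (@my_addN _ _ (mul^~ y)) => u v; apply: mulDl.
pose M z := mul (mul p z) p.
have MD : forall x y, M (x + y) = M x + M y by move=> x y; rewrite /M mulDr mulDl.
apply/eqP; rewrite -subr_eq0; apply/eqP; apply: sep => phi [phD [phZ phC]].
pose psi z := phi (M z).
have hpsi : in_dual psi.
  split; first by move=> x y; rewrite /psi MD phD.
  split; first by move=> k x; rewrite /psi /M (cs_mulZr CS) (cs_mulZl CS) phZ.
  have Mc : continuous M.
    apply: (@bound_continuous R A A M (`|p| * `|p| + 1) MD).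
      by rewrite ltr_wpDl ?mulr_ge0.
    move=> y; rewrite /M; apply: (le_trans (cs_normM CS _ _)).
    apply: (@le_trans _ _ (`|p| * `|y| * `|p|)).
      by apply: ler_wpM2r; [exact: normr_ge0 | exact: (cs_normM CS)].
    by rewrite mulrDl mul1r mulrAC -mulrA lerDl.
  by move=> z; apply: continuous_comp; [exact: Mc | exact: phC].
have [D [[DD [DZ DM]] [h1 h2]]] := W2 (a + b) a psi hpsi.
have Db : M (D b) = 0.
  have D0 : D 0 = 0 by exact: (@my_add0 _ _ _ DD).
  have := DM p b; rewrite pb D0 => /esym /eqP; rewrite addrC addr_eq0 => /eqP e.
  by rewrite /M e mulNl -(cs_mulA CS) bp mul0 oppr0.
have phN : forall x, phi (- x) = - phi x by exact: (@my_addN _ _ _ phD).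
rewrite phD phN.
have -> : phi (mul (mul p (Delta (a + b))) p) = psi (Delta (a + b)) by [].
have -> : phi (mul (mul p (Delta a)) p) = psi (Delta a) by [].
rewrite h1 h2 DD /psi MD Db addr0 subrr.
by [].
Qed.

Theorem lemma3p2 (R : realType) (A : completeNormedModType R[i])
    (mul : A -> A -> A) (star : A -> A) (Delta : A -> A) (p b : A) :
  is_Cstar_algebra mul star ->
  weak_2_local_derivation mul Delta ->
  is_projection mul star p ->
  mul p b = 0 -> mul b p = 0 ->
  (forall a : A, mul (mul p (Delta (a + b))) p = mul (mul p (Delta a)) p) /\
  (forall a : A,
     mul (mul p (Delta a)) p =
     mul (mul p (Delta (a - (a - mul p a - mul a p + mul (mul p a) p)))) p).
Proof.
move=> CS W2 [pstar pp] pb bp; split; first exact: (@part1 R A mul star Delta p b CS W2 pb bp).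
move=> a.
have mulDl := cs_mulDl CS; have mulDr := cs_mulDr CS; have mulA := cs_mulA CS.
have mulNl : forall x y, mul (- x) y = - mul x y.
  by move=> x y; apply: (@my_addN _ _ (mul^~ y)) => u v; apply: mulDl.
have mulNr : forall x y, mul x (- y) = - mul x y.
  by move=> x y; apply: (@my_addN _ _ (mul x)) => u v; apply: mulDr.
set b' := a - mul p a - mul a p + mul (mul p a) p.
have pb' : mul p b' = 0.
  rewrite /b' !mulDr !mulNr !mulA pp.
  by rewrite (subrr (mul p a)) sub0r addNr.
have b'p : mul b' p = 0.
  rewrite /b' !mulDl !mulNl -!mulA pp !mulA.
  by rewrite [X in X + _]addrAC (subrr (mul a p)) sub0r addNr.
have := @part1 R A mul star Delta p b' CS W2 pb' b'p (a - b'); rewrite subrK => ->.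
by [].
Qed.
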